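(* For every integer $d \ge 2$, there exist two monoids $H, H' \in \mathcal{C}_d$ with $\mathcal{L}(H) = \mathcal{L}(H')$ that are not isomorphic; that is, the system of sets of lengths does not characterize monoids in $\mathcal{C}_d$ up to isomorphism.
   Context: Monoids are commutative, cancellative, reduced. $\mathcal{C}_d$ is the collection of all rank-$d$ submonoids of free commutative monoids of finite rank (rank = rank of the Grothendieck group). For an atomic monoid $H$ and $x\in H$, $\mathsf{L}(x)$ is the set of all $n$ such that $x$ is a sum of $n$ atoms; $\mathcal{L}(H)=\{\mathsf{L}(x)\mid x\in H\}$ is the system of sets of lengths. *)

(* Defs.v *)
From HB Require Import structures.
From mathcomp Require Import all_boot all_order all_algebra.
Set Implicit Arguments. Unset Strict Implicit. Unset Printing Implicit Defensive.
Import Order.TTheory GRing.Theory Num.Theory.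
Local Open Scope ring_scope.

(* The free commutative monoid of rank n is N^n, represented as 'rV[nat]_n
   with pointwise addition. A submonoid of it is a subset containing 0 and
   closed under addition (such a monoid is automatically commutative,
   cancellative and reduced). *)
Definition is_submonoid (n : nat) (H : 'rV[nat]_n -> Prop) : Prop :=
  H 0 /\ (forall a b, H a -> H b -> H (a + b)).

Definition ratmx (n k : nat) (v : 'I_k -> 'rV[nat]_n) : 'M[rat]_(k, n) :=
  \matrix_(i < k, j < n) ((v i 0 j)%:R : rat).

(* Rank of the Grothendieck group of H (= the subgroup of Z^n generated by H)
   equals d: the maximal number of Q-linearly independent elements of H is d. *)
Definition monoid_rank (n : nat) (H : 'rV[nat]_n -> Prop) (d : nat) : Prop :=
  (exists v : 'I_d -> 'rV[nat]_n, (forall i, H (v i)) /\ \rank (ratmx v) = d)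
  /\ (forall k (v : 'I_k -> 'rV[nat]_n), (forall i, H (v i)) -> (\rank (ratmx v) <= d)%N).

Definition in_C (d n : nat) (H : 'rV[nat]_n -> Prop) : Prop :=
  is_submonoid H /\ monoid_rank H d.

(* Atoms of H (the only unit of H is 0). *)
Definition is_atom (n : nat) (H : 'rV[nat]_n -> Prop) (a : 'rV[nat]_n) : Prop :=
  H a /\ a <> 0 /\ (forall b c, H b -> H c -> a = b + c -> b = 0 \/ c = 0).

Definition lengths (n : nat) (H : 'rV[nat]_n -> Prop) (x : 'rV[nat]_n) (k : nat) : Prop :=
  exists s : seq 'rV[nat]_n, size s = k /\ (forall a, a \in s -> is_atom H a)
                             /\ \sum_(a <- s) a = x.

Definition same_system_of_lengths (n m : nat)
    (H : 'rV[nat]_n -> Prop) (H' : 'rV[nat]_m -> Prop) : Prop :=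
  (forall x, H x -> exists y, H' y /\ forall k, lengths H x k <-> lengths H' y k) /\
  (forall y, H' y -> exists x, H x /\ forall k, lengths H x k <-> lengths H' y k).

Definition monoid_iso (n m : nat)
    (H : 'rV[nat]_n -> Prop) (H' : 'rV[nat]_m -> Prop) : Prop :=
  exists f : 'rV[nat]_n -> 'rV[nat]_m,
    (forall a, H a -> H' (f a)) /\
    (forall a b, H a -> H b -> f (a + b) = f a + f b) /\
    (forall a b, H a -> H b -> f a = f b -> a = b) /\
    (forall y, H' y -> exists a, H a /\ f a = y).

(* Main.v *)
Require Import Defs.
From mathcomp Require Import all_boot all_order all_algebra.
From mathcomp Require Import zify.
Import GRing.Theory.

Lemma i1 (i : 'I_1) : i = ord0.
Proof. by apply: val_inj; case: i => [[|m]]. Qed.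

Section Aux.
Variable n : nat.
Implicit Types (x a b : 'rV[nat]_n).

Definition Sm x := \sum_j x ord0 j.
Definition Hc (c : nat) x : Prop := (c %| Sm x).

Lemma S_add a b : Sm (a + b)%R = Sm a + Sm b.
Proof. by rewrite /Sm -big_split; apply: eq_bigr => j _; rewrite mxE. Qed.

Lemma S0 : Sm 0%R = 0.
Proof. by rewrite /Sm big1 // => j _; rewrite mxE. Qed.

Lemma S_eq0 x : Sm x = 0 -> x = 0%R.
Proof.
move/eqP; rewrite /Sm sum_nat_eq0 => /forallP H.
apply/matrixP => i j; rewrite (i1 i) mxE; apply/eqP; exact: (implyP (H j)).
Qed.

Lemma entry_le x j : x ord0 j <= Sm x.
Proof. by rewrite /Sm (bigD1 j) //= leq_addr. Qed.

Lemma sub_exists m x : m <= Sm x ->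
  exists b, (forall j, b ord0 j <= x ord0 j) /\ Sm b = m.
Proof.
elim: m => [|m IH] Hm.
  by exists 0%R; split; [move=> j; rewrite mxE | exact: S0].
have [b [Hb Sb]] := IH (ltnW Hm).
case: (boolP [exists j, b ord0 j < x ord0 j]).
  move/existsP=> [j Hj].
  exists (\row_k (b ord0 k + (k == j))%N)%R.
  split.
    move=> k; rewrite mxE; case: eqP => [->|_]; first by rewrite addn1.
    by rewrite addn0.
  rewrite /Sm (bigD1 j) //= mxE eqxx.
  rewrite (eq_bigr (fun k => b ord0 k)); last first.
    by move=> k /negPf Hk; rewrite mxE Hk addn0.
  move: Sb; rewrite /Sm (bigD1 j) //= => <-; lia.
rewrite negb_exists => /forallP H.
have : Sm x <= Sm b by rewrite /Sm; apply: leq_sum => j _; rewrite leqNgt H.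
lia.
Qed.

Definition rsub x b := (\row_k (x ord0 k - b ord0 k)%N)%R.

Lemma rsubK x b : (forall j, b ord0 j <= x ord0 j) -> (b + rsub x b)%R = x.
Proof.
move=> H; apply/matrixP => i j; rewrite (i1 i) !mxE natrDE subnKC //.
Qed.

Lemma atomP c a : 0 < c -> is_atom (Hc c) a <-> (Hc c a /\ Sm a = c).
Proof.
move=> c0; split.
  move=> [Ha [Ha0 Hd]]; split => //.
  have Sa0 : Sm a != 0 by apply/eqP => /S_eq0.
  move: Ha; rewrite /Hc => /dvdnP [q Hq].
  case: (ltnP (Sm a) (2 * c)) => Hlt.
    have : q = 1 by move: Hq Hlt Sa0; clear; case: q => [|[|q]]; nia.
    by move=> Eq; rewrite Hq Eq mul1n.
  have [b [Hb Sb]] := @sub_exists c a ltac:(lia).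
  have Ha' := @rsubK _ _ Hb.
  have Sr : Sm (rsub a b) = Sm a - c by move: (S_add b (rsub a b)); rewrite Ha'; lia.
  case: (Hd b (rsub a b)).
  - by rewrite /Hc Sb.
  - by rewrite /Hc Sr Hq dvdn_sub ?dvdn_mull.
  - by rewrite Ha'.
  - by move=> E; move: Sb; rewrite E S0; lia.
  - by move=> E; move: Sr; rewrite E S0; lia.
move=> [Ha Sa]; split => //; split.
  by move=> E; move: Sa; rewrite E S0; lia.
move=> b1 c1 Hb Hc1 E.
have : Sm a = Sm b1 + Sm c1 by rewrite E S_add.
move: Hb Hc1; rewrite /Hc => /dvdnP [p Hp] /dvdnP [q Hq].
rewrite Sa Hp Hq => Es.
have : (p == 0) || (q == 0) by move: Es c0; clear; case: p => [|p]; case: q => [|q]; nia.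
case/orP => /eqP E0.
  by left; apply: S_eq0; rewrite Hp E0.
by right; apply: S_eq0; rewrite Hq E0.
Qed.

Lemma S_sum (s : seq 'rV[nat]_n) c : (forall a, a \in s -> Sm a = c) ->
  Sm (\sum_(a <- s) a)%R = size s * c.
Proof.
elim: s => [|y s IH] H; first by rewrite big_nil S0.
rewrite big_cons S_add IH; last by move=> a Ha; apply: H; rewrite inE Ha orbT.
by rewrite H ?mem_head //=; lia.
Qed.

Lemma lengthsP c x k : 0 < c -> lengths (Hc c) x k <-> k * c = Sm x.
Proof.
move=> c0; split.
  move=> [s [Hs [Ha <-]]]; rewrite (@S_sum _ c) -?Hs // => a /Ha /(@atomP c a c0) [].
  by [].
elim: k x => [|k IH] x Hk.
  exists [::]; split => //; split => //.
  by rewrite big_nil; symmetry; apply: S_eq0; rewrite -Hk.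
have [b [Hb Sb]] := @sub_exists c x ltac:(lia).
have Ha' := @rsubK _ _ Hb.
have Sr : Sm (rsub x b) = k * c by move: (S_add b (rsub x b)); rewrite Ha'; lia.
have [s [Hs [Hat Hsum]]] := IH _ (esym Sr).
exists (b :: s); split; first by rewrite /= Hs.
split; last by rewrite big_cons Hsum.
move=> a; rewrite inE => /orP [/eqP ->|/Hat //].
by apply/(@atomP c b c0); split => //; rewrite /Hc Sb.
Qed.

Lemma Hc_sub c : is_submonoid (Hc c).
Proof.
split; first by rewrite /Hc S0 dvdn0.
by move=> a b; rewrite /Hc S_add; apply: dvdn_add.
Qed.

Definition v2 (i : 'I_n) : 'rV[nat]_n := (\row_k ((k == i) * 2)%N)%R.

Lemma S_v2 i : Sm (v2 i) = 2.
Proof.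
rewrite /Sm (bigD1 i) //= big1 ?mxE ?eqxx //.
by move=> k /negPf Hk; rewrite mxE Hk.
Qed.

Lemma rank_Hc c : c %| 2 -> monoid_rank (Hc c) n.
Proof.
move=> Hc2; split.
  exists v2; split; first by move=> i; rewrite /Hc S_v2.
  have -> : ratmx v2 = ((2%:R : rat) *: (1%:M : 'M[rat]_n))%R.
    apply/matrixP => i j; rewrite !mxE.
    by case: eqP => [->|/eqP Hne]; [rewrite eqxx GRing.mulr1 | rewrite eq_sym (negPf Hne) GRing.mulr0].
  by rewrite (@mxrank_scale_nz _ _ _ (2%:R : rat)) // mxrank1.
by move=> k v _; apply: rank_leq_col.
Qed.

End Aux.
Arguments Sm {n} x.
Arguments Hc {n} c x.
Arguments v2 {n} i.

Lemma atom_entries n (a : 'rV[nat]_n) j : Sm a = 1%N -> a ord0 j <= 1.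
Proof. by move=> Ha; apply: leq_trans (@entry_le _ a j) _; rewrite Ha. Qed.

Lemma par_lemma (x y z : nat) : (x + x)%N = (y + z)%N -> y <= 1 -> z <= 1 -> y = z.
Proof. lia. Qed.

Lemma non_iso n (i j : 'I_n) : i != j -> ~ monoid_iso (@Hc n 1) (@Hc n 2).
Proof.
move=> Hij [f [Hf [Hadd [Hinj Hsurj]]]].
have H1 : forall x : 'rV[nat]_n, Hc 1 x by move=> x; rewrite /Hc dvd1n.
have f0 : f 0%R = 0%R.
  have := Hadd 0%R 0%R (H1 _) (H1 _); rewrite addr0 => E.
  apply: S_eq0; move: (congr1 (@Sm n) E); rewrite S_add; lia.
have pre : forall a, is_atom (Hc 2) (f a) -> Sm a = 1.
  move=> a [_ [Hfa0 Hd]].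
  suff : is_atom (Hc 1) a by move/(@atomP n 1 a (ltn0Sn 0)) => [].
  split; first exact: H1; split.
    by move=> E; apply: Hfa0; rewrite E f0.
  move=> b c _ _ E.
  case: (Hd (f b) (f c) (Hf _ (H1 _)) (Hf _ (H1 _))).
  - by rewrite E Hadd.
  - by move=> Eb; left; apply: Hinj => //; rewrite Eb f0.
  - by move=> Ec; right; apply: Hinj => //; rewrite Ec f0.
set u : 'rV[nat]_n := (\row_k ((k == i) + (k == j))%N)%R.
set v := v2 i. set w := v2 j.
have Su : Sm u = 2.
  rewrite /Sm (bigD1 i) //= (bigD1 j) 1?eq_sym //= big1 ?mxE.
    by rewrite eqxx (negPf Hij) eq_sym (negPf Hij) eqxx.
  move=> k /andP [/negPf Hk1 /negPf Hk2]; rewrite mxE Hk1 Hk2 //.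
have atom2 : forall y : 'rV[nat]_n, Sm y = 2 -> is_atom (Hc 2) y.
  by move=> y Sy; apply: (proj2 (@atomP n 2 y (ltn0Sn 1))); split => //; rewrite /Hc Sy.
have [a [_ Ea]] := Hsurj u ltac:(by rewrite /Hc Su).
have [b [_ Eb]] := Hsurj v ltac:(by rewrite /Hc S_v2).
have [c [_ Ec]] := Hsurj w ltac:(by rewrite /Hc S_v2).
have Sa := pre a ltac:(by rewrite Ea; apply: atom2).
have Sb := pre b ltac:(by rewrite Eb; apply: atom2; apply: S_v2).
have Sc := pre c ltac:(by rewrite Ec; apply: atom2; apply: S_v2).
have E : (a + a)%R = (b + c)%R.
  apply: Hinj; rewrite ?Hadd ?Ea ?Eb ?Ec //.
  apply/matrixP => p q; rewrite (i1 p) !mxE.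
  by rewrite !natrDE; case: (q == i); case: (q == j).
have bc : b = c.
  apply/matrixP => p q; rewrite (i1 p).
  have := congr1 (fun M : 'rV[nat]_n => M ord0 q) E; rewrite /= !mxE.
  move=> Eq; apply: (@par_lemma (a ord0 q)) => //; [exact: (@atom_entries n b q Sb) | exact: (@atom_entries n c q Sc)].
have : v ord0 i = w ord0 i by rewrite -Eb -Ec bc.
by rewrite !mxE eqxx (negPf Hij).
Qed.

Theorem proposition4p10 (d : nat) : (2 <= d)%N ->
  exists (n m : nat) (H : 'rV[nat]_n -> Prop) (H' : 'rV[nat]_m -> Prop),
    in_C d H /\ in_C d H' /\ same_system_of_lengths H H' /\ ~ monoid_iso H H'.
Proof.
case: d => [|[|d]] // _.
exists d.+2, d.+2, (Hc 1), (Hc 2).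
split; first by split; [exact: Hc_sub | apply: rank_Hc; exact: dvd1n].
split; first by split; [exact: Hc_sub | apply: rank_Hc].
split; last by apply: (@non_iso _ ord0 (inord 1)); rewrite -val_eqE /= inordK.
split.
  move=> x _; exists (x + x)%R; split.
    by rewrite /Hc S_add; apply/dvdnP; exists (Sm x); lia.
  move=> k; rewrite !lengthsP // S_add; lia.
move=> y; rewrite /Hc => /dvdnP [q Hq].
have [b [_ Sb]] := @sub_exists _ q y ltac:(lia).
exists b; split; first by rewrite /Hc dvd1n.
move=> k; rewrite !lengthsP //; lia.
Qed.
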